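(* Let $1\le k\le n$ and let $\lambda=(\lambda_1,\dots,\lambda_n)$ be a partition with $\lambda_{n-k+1}=\dots=\lambda_n=0$. Let $x=(x_1,\dots,x_{n-k},t^{k-1},t^{k-2},\dots,t,1)\in\mathbb{C}^n$, $\hat\lambda=(\lambda_1,\dots,\lambda_{n-k})$ and $\hat x=(x_1,\dots,x_{n-k})$. Then $$W_\lambda(x;q,p,t,a,b)=W_{\hat\lambda}(\hat xt^{-k};q,p,t,at^{2k},bt^{k}).$$
   Context: Fix $|p|<1$; parameters generic. $E(x)=(x;p)_\infty(p/x;p)_\infty$. For integer $m\ge0$, $(a)_m=\prod_{k=0}^{m-1}E(aq^k)$, for $m<0$, $(a)_m=1/(aq^m)_{-m}$; for a partition $\lambda$ with $N$ parts $(a)_\lambda=\prod_{i=1}^N(at^{1-i})_{\lambda_i}$; several arguments denote products; integer subscripts denote the single-integer symbol. Scalars multiply tuples componentwise. $W$ functions for $N$-part partitions (here $N=n$ or $N=n-k$, the number of variables): for $\lambda_1\ge\mu_1\ge\dots\ge\lambda_N\ge\mu_N$, $\lambda_{N+1}=\mu_{N+1}=0$, $H_{\lambda/\mu}(q,p,t,b)=\prod_{1\le i<j\le N}\Big\{\frac{(q^{\mu_i-\mu_{j-1}}t^{j-i})_{\mu_{j-1}-\lambda_j}(q^{\lambda_i+\lambda_j}t^{3-j-i}b)_{\mu_{j-1}-\lambda_j}}{(q^{\mu_i-\mu_{j-1}+1}t^{j-i-1})_{\mu_{j-1}-\lambda_j}(q^{\lambda_i+\lambda_j+1}t^{2-j-i}b)_{\mu_{j-1}-\lambda_j}}\frac{(q^{\lambda_i-\mu_{j-1}+1}t^{j-i-1})_{\mu_{j-1}-\lambda_j}}{(q^{\lambda_i-\mu_{j-1}}t^{j-i})_{\mu_{j-1}-\lambda_j}}\Big\}\prod_{1\le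 i<j-1\le N}\frac{(q^{\mu_i+\lambda_j+1}t^{1-j-i}b)_{\mu_{j-1}-\lambda_j}}{(q^{\mu_i+\lambda_j}t^{2-j-i}b)_{\mu_{j-1}-\lambda_j}}$; for $x\in\mathbb{C}$, $W_{\lambda/\mu}(x;q,p,t,a,b)=H_{\lambda/\mu}\frac{(x^{-1},ax)_\lambda(qbx/t,qb/(axt))_\mu}{(x^{-1},ax)_\mu(qbx,qb/(ax))_\lambda}\prod_{i=1}^N\frac{E(bt^{1-2i}q^{2\mu_i})}{E(bt^{1-2i})}\frac{(bt^{1-2i})_{\mu_i+\lambda_{i+1}}}{(bqt^{-2i})_{\mu_i+\lambda_{i+1}}}t^{i(\mu_i-\lambda_{i+1})}$ (zero if the interlacing fails); recursively $W_{\lambda/\mu}(y,z_1,\dots,z_\ell;q,p,t,a,b)=\sum_\nu W_{\lambda/\nu}(yt^{-\ell};q,p,t,at^{2\ell},bt^\ell)W_{\nu/\mu}(z_1,\dots,z_\ell;q,p,t,a,b)$ over $\nu$ with $\lambda_1\ge\nu_1\ge\dots\ge\lambda_N\ge\nu_N\ge0$; $W_\lambda=W_{\lambda/0}$, a function of $N$ variables. *)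

(* Defs.v *)
From HB Require Import structures.
From mathcomp Require Import all_boot all_order all_algebra.
From mathcomp Require Import complex.
From mathcomp Require Import all_classical all_reals all_analysis.

Set Implicit Arguments.
Unset Strict Implicit.
Unset Printing Implicit Defensive.

Import Order.TTheory GRing.Theory Num.Theory.
Import numFieldTopology.Exports numFieldNormedType.Exports.
Local Open Scope ring_scope.
Local Open Scope complex_scope.

Definition complexC (R : realType) : numClosedFieldType := R[i].

Definition qpoch_inf (R : realType) (x p : complexC R) : complexC R :=
  limn (fun n : nat => \prod_(k < n) (1 - x * p ^+ k)).

Definition Eth (R : realType) (p x : complexC R) : complexC R :=
  qpoch_inf x p * qpoch_inf (p / x) p.

Definition epoch (R : realType) (q p a : complexC R) (m : int) : complexC R :=
  match m with
  | Posz n => \prod_(k < n) Eth p (a * q ^+ k)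
  | Negz n => (\prod_(k < n.+1) Eth p (a * q ^ (- (n.+1)%:Z) * q ^+ k))^-1
  end.

(* i-th part (1-indexed) of an N-part partition stored as a seq nat;
   lambda_i = 0 for i > N (in particular lambda_{N+1} = 0). *)
Definition part (N : nat) (l : seq nat) (i : nat) : nat :=
  if (1 <= i <= N)%N then nth 0%N l i.-1 else 0%N.

Definition epochP (R : realType) (N : nat) (q p t a : complexC R) (l : seq nat) : complexC R :=
  \prod_(1 <= i < N.+1) epoch q p (a * t ^ (1 - i%:Z)) (part N l i)%:Z.

(* (a)_lambda / (a)_mu, written in cancelled form
   prod_{i=1}^N (a t^{1-i} q^{mu_i})_{lambda_i - mu_i}. *)
Definition epochR (R : realType) (N : nat) (q p t a : complexC R) (l m : seq nat) : complexC R :=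
  \prod_(1 <= i < N.+1)
     epoch q p (a * t ^ (1 - i%:Z) * q ^ (part N m i)%:Z)
           ((part N l i)%:Z - (part N m i)%:Z).

Definition interlace (N : nat) (l m : seq nat) : bool :=
  [forall i : 'I_N, (part N m i.+1 <= part N l i.+1)%N
                    && (part N l i.+2 <= part N m i.+1)%N].

Definition Hfac (R : realType) (N : nat) (q p t b : complexC R) (l m : seq nat) : complexC R :=
  let L := part N l in let M := part N m in
  let e := fun a (n : int) => epoch q p a n in
  (\prod_(1 <= j < N.+1) \prod_(1 <= i < j)
     (let d := (M j.-1)%:Z - (L j)%:Z in
      (e (q ^ ((M i)%:Z - (M j.-1)%:Z) * t ^ (j%:Z - i%:Z)) d
       * e (q ^ ((L i)%:Z + (L j)%:Z) * t ^ (3 - j%:Z - i%:Z) * b) d)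
      / (e (q ^ ((M i)%:Z - (M j.-1)%:Z + 1) * t ^ (j%:Z - i%:Z - 1)) d
       * e (q ^ ((L i)%:Z + (L j)%:Z + 1) * t ^ (2 - j%:Z - i%:Z) * b) d)
      * (e (q ^ ((L i)%:Z - (M j.-1)%:Z + 1) * t ^ (j%:Z - i%:Z - 1)) d
         / e (q ^ ((L i)%:Z - (M j.-1)%:Z) * t ^ (j%:Z - i%:Z)) d)))
  * (\prod_(1 <= j < N.+2) \prod_(1 <= i < j.-1)
     (let d := (M j.-1)%:Z - (L j)%:Z in
      e (q ^ ((M i)%:Z + (L j)%:Z + 1) * t ^ (1 - j%:Z - i%:Z) * b) d
      / e (q ^ ((M i)%:Z + (L j)%:Z) * t ^ (2 - j%:Z - i%:Z) * b) d)).

Definition W1 (R : realType) (N : nat) (q p t a b : complexC R) (l m : seq nat) (x : complexC R)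
  : complexC R :=
  if interlace N l m then
    let L := part N l in let M := part N m in
    Hfac N q p t b l m
    * epochR N q p t (x^-1) l m * epochR N q p t (a * x) l m
    * (epochP N q p t (q * b * x / t) m * epochP N q p t (q * b / (a * x * t)) m)
    / (epochP N q p t (q * b * x) l * epochP N q p t (q * b / (a * x)) l)
    * \prod_(1 <= i < N.+1)
        (Eth p (b * t ^ (1 - 2 * i%:Z) * q ^ (2 * (M i)%:Z)) / Eth p (b * t ^ (1 - 2 * i%:Z))
         * (epoch q p (b * t ^ (1 - 2 * i%:Z)) ((M i)%:Z + (L i.+1)%:Z)
            / epoch q p (b * q * t ^ (- 2 * i%:Z)) ((M i)%:Z + (L i.+1)%:Z))
         * t ^ (i%:Z * ((M i)%:Z - (L i.+1)%:Z)))
  else 0.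

Fixpoint allseqs (N B : nat) : seq (seq nat) :=
  match N with
  | 0 => [:: [::]]
  | N'.+1 => [seq x :: s | x <- iota 0 B.+1, s <- allseqs N' B]
  end.

Fixpoint W (R : realType) (N : nat) (q p t : complexC R) (l m : seq nat) (xs : seq (complexC R))
  (a b : complexC R) {struct xs} : complexC R :=
  match xs with
  | [::] => if [forall i : 'I_N, part N l i.+1 == part N m i.+1] then 1 else 0
  | [:: y] => W1 N q p t a b l m y
  | y :: zs =>
      let ell := size zs in
      \sum_(nu <- allseqs N (part N l 1) | interlace N l nu)
         W1 N q p t (a * t ^+ (2 * ell)) (b * t ^+ ell) l nu (y * t ^- ell)
         * W N q p t nu m zs a b
  end.

(* Main.v *)
Require Import Defs.
From HB Require Import structures.
From mathcomp Require Import all_boot all_order all_algebra.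
From mathcomp Require Import complex.
From mathcomp Require Import all_classical all_reals all_analysis.
From mathcomp Require Import zify.
Import Order.TTheory GRing.Theory Num.Theory.
Import numFieldTopology.Exports numFieldNormedType.Exports.
Local Open Scope ring_scope.
Local Open Scope complex_scope.
Set Implicit Arguments. Unset Strict Implicit. Unset Printing Implicit Defensive.

Lemma qpoch1 (R : realType) (p : complexC R) : qpoch_inf 1 p = 0.
Proof.
rewrite /qpoch_inf.
apply: (@lim_near_cst (complexC R : numFieldType)).
  exact: norm_hausdorff.
exists 1%N => // -[|N] // _ /=.
by rewrite big_ord_recl expr0 mulr1 subrr mul0r.
Qed.

Lemma Eth1 (R : realType) (p : complexC R) : Eth p 1 = 0.
Proof. by rewrite /Eth qpoch1 mul0r. Qed.

Lemma part_out N l i : (N < i)%N -> part N l i = 0%N.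
Proof. move=> h; rewrite /part; have -> : (i <= N)%N = false by rewrite leqNgt h.
by rewrite andbF. Qed.

Lemma part0 N l : part N l 0 = 0%N.
Proof. by []. Qed.

Lemma part_nseq N M i : part N (nseq M 0%N) i = 0%N.
Proof. by rewrite /part nth_nseq; case: ifP => //; case: ifP. Qed.

Lemma forall_trunc m N (P : nat -> bool) : (m <= N)%N ->
  (forall i, (m <= i)%N -> P i) ->
  [forall i : 'I_N, P i] = [forall i : 'I_m, P i].
Proof.
move=> hmN hP; apply/forallP/forallP => H i.
  exact: (H (widen_ord hmN i)).
case: (ltnP i m) => him; last exact: hP.
exact: (H (Ordinal him)).
Qed.

Lemma interlace_trunc m N a a' b b' : (m <= N)%N ->
  (forall i, part N a i = part m a' i) -> (forall i, part N b i = part m b' i) ->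
  interlace N a b = interlace m a' b'.
Proof.
move=> hmN ha hb; rewrite /interlace.
have -> : part N a = part m a' by apply: funext.
have -> : part N b = part m b' by apply: funext.
apply: (@forall_trunc m N (fun i => (part m b' i.+1 <= part m a' i.+1)%N
   && (part m a' i.+2 <= part m b' i.+1)%N)) => // i hi.
rewrite (@part_out m b' i.+1) ?(@part_out m a' i.+2) //.
by apply: leq_trans hi _.
Qed.

Lemma interlaceP N l nu i : interlace N l nu -> (i < N)%N ->
  (part N nu i.+1 <= part N l i.+1)%N /\ (part N l i.+2 <= part N nu i.+1)%N.
Proof. by move=> /forallP H hi; have /andP[] := H (Ordinal hi). Qed.

Lemma interlace_le N l nu i : interlace N l nu -> (part N nu i <= part N l i)%N.
Proof.
move=> H; case: i => [|i] //; case: (ltnP i N) => hi.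
  by case: (interlaceP H hi).
by rewrite part_out.
Qed.

Lemma interlace_zero N l nu s : interlace N l nu -> (0 < s)%N -> part N nu s = 0%N ->
  forall j, (s <= j)%N -> part N nu j = 0%N.
Proof.
move=> H hs h0; elim=> [|j IH]; first by rewrite leqn0 => /eqP hs0; rewrite hs0 in hs.
rewrite leq_eqVlt => /orP[/eqP <- //|]; rewrite ltnS => hsj.
case: (ltnP j N) => hjN; last by rewrite part_out.
case: j IH hsj hjN => [|j] IH hsj hjN; first by move: (leq_trans hs hsj).
have [h1 _] := interlaceP H hjN.
have [_ h2] := interlaceP H (ltnW hjN).
apply/eqP; rewrite -leqn0; apply: leq_trans h1 _; apply: leq_trans h2 _.
by rewrite IH.
Qed.

Lemma mem_allseqs N B s : (s \in allseqs N B) = (size s == N) && all (fun x => x <= B)%N s.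
Proof.
elim: N s => [|N IH] s.
  by case: s.
apply/allpairsP/idP => [[[y u] [hy hu ->]]|].
  move: hu hy; rewrite IH mem_iota add0n ltnS => /andP[hsu hau] hy.
  by rewrite /= eqSS hsu hau; case/andP: hy => _ ->.
case: s => [|x s]; first by [].
move=> /andP[hs /andP[hx ha]].
exists (x, s); split; [by rewrite mem_iota add0n ltnS | | by []].
by rewrite IH -(eqSS _ N) hs.
Qed.

Lemma uniq_allseqs N B : uniq (allseqs N B).
Proof.
elim: N => [|N IH] //.
have -> : allseqs N.+1 B = [seq x :: s | x <- iota 0 B.+1, s <- allseqs N B] by [].
apply: allpairs_uniq => //; first exact: iota_uniq.
by move=> [x s] [y u] _ _ /= [-> ->].
Qed.

Lemma size_allseqs N B s : s \in allseqs N B -> size s = N.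
Proof. by rewrite mem_allseqs => /andP[/eqP]. Qed.

Lemma nseq_allseqs N B : nseq N 0%N \in allseqs N B.
Proof. by rewrite mem_allseqs size_nseq eqxx /=; apply/allP => x /nseqP [->]. Qed.

Lemma Zpart N nu : size nu = N ->
  [forall i : 'I_N, part N nu i.+1 == part N (nseq N 0%N) i.+1] = (nu == nseq N 0%N).
Proof.
move=> hs; apply/forallP/eqP => [H|->]; last by move=> i.
apply: (eq_from_nth (x0 := 0%N)); rewrite ?size_nseq // => i hi.
have hiN : (i < N)%N by rewrite -hs.
have := H (Ordinal hiN); rewrite part_nseq /part /= hiN nth_nseq hiN.
by move/eqP.
Qed.

Section WLemmas.
Variable R : realType.
Implicit Types (q p t a b x y : complexC R).

Lemma sum_pick0 N B l (F : seq nat -> complexC R) :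
  \sum_(nu <- allseqs N B | interlace N l nu)
     F nu * (if [forall i : 'I_N, part N nu i.+1 == part N (nseq N 0%N) i.+1] then 1 else 0)
  = if interlace N l (nseq N 0%N) then F (nseq N 0%N) else 0.
Proof.
rewrite big_mkcond (bigD1_seq (nseq N 0%N)) ?nseq_allseqs ?uniq_allseqs //=.
rewrite big1_seq ?addr0.
  by case: ifP => _ //; rewrite Zpart ?size_nseq // eqxx mulr1.
move=> nu /andP[hne hin]; case: ifP => _ //.
by rewrite Zpart ?(size_allseqs hin) // (negbTE hne) mulr0.
Qed.

Lemma W_cons N q p t l m y zs a b : zs != [::] ->
  W N q p t l m (y :: zs) a b =
  \sum_(nu <- allseqs N (part N l 1) | interlace N l nu)
     W1 N q p t (a * t ^+ (2 * size zs)) (b * t ^+ size zs) l nu (y * t ^- size zs)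
     * W N q p t nu m zs a b.
Proof. by case: zs. Qed.

Lemma W1_nointer N q p t a b l m x : ~~ interlace N l m -> W1 N q p t a b l m x = 0.
Proof. by move=> h; rewrite /W1 (negbTE h). Qed.

Lemma W1_part N q p t a b l l' m m' x : part N l = part N l' -> part N m = part N m' ->
  W1 N q p t a b l m x = W1 N q p t a b l' m' x.
Proof. by move=> E1 E2; rewrite /W1 /Hfac /epochR /epochP /interlace E1 E2. Qed.

Lemma interlace_part N l l' m : part N l = part N l' -> interlace N l m = interlace N l' m.
Proof. by move=> E; rewrite /interlace E. Qed.

Lemma W_part N q p t l l' m xs a b : part N l = part N l' ->
  W N q p t l m xs a b = W N q p t l' m xs a b.
Proof.
move=> E; case: xs => [|y [|z zs]].
- by rewrite /= E.
- by rewrite /=; apply: W1_part.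
rewrite !W_cons // E; apply: eq_big => [nu|nu _]; first by rewrite (interlace_part _ E).
by rewrite (W1_part _ _ _ _ _ _ E (erefl _)).
Qed.

Lemma W_vanish N q p t a b T :
  (forall nu, part N nu 1 != 0%N -> W N q p t nu (nseq N 0%N) T a b = 0) ->
  forall xs l, part N l (size xs).+1 != 0%N -> W N q p t l (nseq N 0%N) (xs ++ T) a b = 0.
Proof.
move=> HT; elim=> [|y xs IH] l hl; first exact: HT.
have hsN : ((size xs).+2 <= N)%N.
  by rewrite leqNgt; apply/negP => h; move: hl; rewrite part_out.
rewrite cat_cons; case E: (xs ++ T) => [|z zs].
  have xs0 : xs = [::] by case: xs E {IH hl hsN}.
  move: hl hsN; rewrite xs0 /= => hl hsN.
  rewrite W1_nointer //; apply/negP => /interlaceP/(_ (ltnW hsN)).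
  by case=> _; rewrite part_nseq leqn0; apply/negP.
rewrite W_cons // -E; apply: big1 => nu hnu; rewrite IH ?mulr0 //.
have [_ h] := interlaceP hnu (i := size xs) (ltnW hsN).
by apply: contraNneq hl => h0; rewrite -leqn0 -h0.
Qed.

End WLemmas.

Section Tail.
Variable R : realType.
Implicit Types (q p t a b x y : complexC R).

Lemma epoch0 q p c : epoch q p c 0 = 1.
Proof. exact: big_ord0. Qed.

Lemma epochR1 N q p t l m : (0 < part N l 1)%N -> part N m 1 = 0%N ->
  epochR N q p t 1^-1 l m = 0.
Proof.
move=> hl hm; have hN : (0 < N)%N by rewrite lt0n; apply/eqP => N0; move: hl; rewrite N0.
rewrite /epochR big_ltn ?ltnS // hm subrr expr0z invr1 !mulr1.
case E: (part N l 1) hl => [|n] // _; rewrite subr0 /epoch big_ord_recl expr0 mulr1 Eth1.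
by rewrite !mul0r.
Qed.

Lemma W1_at1 N q p t a b l : (forall i : nat, Eth p (b * t ^ (1 - 2 * i%:Z)) != 0) ->
  W1 N q p t a b l (nseq N 0%N) 1 =
  if [forall i : 'I_N, part N l i.+1 == part N (nseq N 0%N) i.+1] then 1 else 0.
Proof.
move=> hE.
have Zz : [forall i : 'I_N, part N l i.+1 == part N (nseq N 0%N) i.+1] ->
   forall j, part N l j = 0%N.
  move=> /forallP H [|j] //; case: (ltnP j N) => hj; last by rewrite part_out.
  by have := H (Ordinal hj); rewrite part_nseq => /eqP.
case: (boolP (interlace N l (nseq N 0%N))) => hi; last first.
  rewrite W1_nointer //; case: ifP => // /Zz hz; move/negP: hi; case.
  rewrite /interlace (funext hz); apply/forallP => i /=.
  by rewrite !part_nseq.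
have h2 : forall j, (2 <= j)%N -> part N l j = 0%N.
  case=> [|[|j]] // _; case: (ltnP j N) => hj; last by rewrite part_out //; lia.
  by have [_] := interlaceP hi hj; rewrite part_nseq leqn0 => /eqP.
case: (posnP (part N l 1)) => h1.
  have hz : forall j, part N l j = 0%N by case=> [|[|j]] //; apply: h2.
  have -> : [forall i : 'I_N, part N l i.+1 == part N (nseq N 0%N) i.+1].
    by apply/forallP => i; rewrite hz part_nseq.
  rewrite /W1 hi /Hfac /epochR /epochP (funext hz).
  have -> : part N (nseq N 0%N) = fun _ => 0%N by apply: funext => j; rewrite part_nseq.
  rewrite /= !addn0.
  do ! (rewrite big1 ?mul1r; last first).
  all: try (move=> j _; rewrite ?big_ord0 ?(mulr1, mul1r, invr1, divr1) //;
     try (apply: big1 => i _; rewrite ?big_ord0 ?(mulr1, mul1r, invr1, divr1) //)).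
  all: try by rewrite invr1 mulr1.
  by rewrite divff ?hE // subrr mulr0 expr0z mulr1.
have hN : (0 < N)%N by rewrite lt0n; apply/eqP => N0; move: h1; rewrite N0.
have -> : [forall i : 'I_N, part N l i.+1 == part N (nseq N 0%N) i.+1] = false.
  apply/negP => /forallP /(_ (Ordinal hN)); rewrite part_nseq /=.
  by rewrite eqn0Ngt h1.
rewrite /W1 hi epochR1 ?part_nseq //.
by rewrite !(mulr0, mul0r).
Qed.

End Tail.

Section Tail2.
Variable R : realType.
Implicit Types (q p t a b x y : complexC R).

Definition Tl t r := [seq t ^+ (r - 1 - j) | j <- iota 0 r].

Lemma Tl_S t r : Tl t r.+1 = t ^+ r :: Tl t r.
Proof.
rewrite /Tl /= subn0 subn1 /=; congr (_ :: _).
rewrite -[1%N]addn0 iotaDl -map_comp; apply: eq_map => j /=; congr (_ ^+ _); lia.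
Qed.

Lemma size_Tl t r : size (Tl t r) = r.
Proof. by rewrite size_map size_iota. Qed.

Lemma W_tail N q p t a b : t != 0 ->
  (forall (s i : nat), Eth p (b * t ^+ s * t ^ (1 - 2 * i%:Z)) != 0) ->
  forall r l, (0 < r)%N ->
  W N q p t l (nseq N 0%N) (Tl t r) a b =
  if [forall i : 'I_N, part N l i.+1 == part N (nseq N 0%N) i.+1] then 1 else 0.
Proof.
move=> ht hE; elim=> [|r IH] l // _.
case: r IH => [|r] IH.
  rewrite /Tl /= expr0; apply: W1_at1 => i.
  by have := hE 0%N i; rewrite expr0 mulr1.
rewrite Tl_S W_cons ?size_Tl; last by rewrite Tl_S.
rewrite mulfV ?expf_neq0 //.
under eq_bigr => nu _ do rewrite IH //.
rewrite sum_pick0.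
have -> : (if interlace N l (nseq N 0%N) then
    W1 N q p t (a * t ^+ (2 * r.+1)) (b * t ^+ r.+1) l (nseq N 0%N) 1 else 0)
  = W1 N q p t (a * t ^+ (2 * r.+1)) (b * t ^+ r.+1) l (nseq N 0%N) 1.
  by case: ifP => // /negbT /W1_nointer ->.
exact: W1_at1.
Qed.

End Tail2.

Section Trunc.
Variable R : realType.
Implicit Types (q p t a b x y : complexC R).

Lemma prod_trunc (F : nat -> complexC R) m N : (m <= N)%N ->
  (forall i, (m < i)%N -> F i = 1) ->
  \prod_(1 <= i < N.+1) F i = \prod_(1 <= i < m.+1) F i.
Proof.
move=> hmN hF; rewrite (big_cat_nat _ (n := m.+1)) //= ?ltnS //.
have -> : \prod_(m.+1 <= i < N.+1) F i = 1.
  by rewrite big_nat_cond big1 // => i /andP[/andP[hi _] _]; exact: hF.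
by rewrite mulr1.
Qed.

Variables (m N : nat) (hmN : (m <= N)%N).
Variables (al al' be be' : seq nat).
Hypothesis ha : forall i, part N al i = part m al' i.
Hypothesis hb : forall i, part N be i = part m be' i.

Lemma epochR_trunc q p t c : epochR N q p t c al be = epochR m q p t c al' be'.
Proof.
rewrite /epochR (funext ha) (funext hb) (prod_trunc hmN) // => i hi.
by rewrite !part_out // subrr epoch0.
Qed.

Lemma epochP_trunc q p t c : epochP N q p t c al = epochP m q p t c al'.
Proof.
rewrite /epochP (funext ha) (prod_trunc hmN) // => i hi.
by rewrite !part_out // epoch0.
Qed.

Lemma epochP_trunc' q p t c : epochP N q p t c be = epochP m q p t c be'.
Proof.
rewrite /epochP (funext hb) (prod_trunc hmN) // => i hi.
by rewrite !part_out // epoch0.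
Qed.

Hypothesis hbm : part m be' m = 0%N.

Lemma Hfac_trunc q p t b : Hfac N q p t b al be = Hfac m q p t b al' be'.
Proof.
rewrite /Hfac (funext ha) (funext hb) (prod_trunc hmN); last first.
  move=> j hj; apply: big1 => i _.
  have hMj : part m be' j.-1 = 0%N.
    case: j hj => // j; rewrite ltnS leq_eqVlt => /orP[/eqP <- //|hj].
    by rewrite part_out.
  rewrite hMj (@part_out m al' j hj) subrr !epoch0.
  by rewrite !(mulr1, invr1).
rewrite (prod_trunc (m := m.+1) (N := N.+1)) //.
move=> j hj; apply: big1 => i _.
have hj' : (m < j.-1)%N by case: j hj.
rewrite (@part_out m be' j.-1 hj') (@part_out m al' j (ltn_trans (ltnSn m) hj)) subrr !epoch0.
by rewrite !(mulr1, invr1).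
Qed.

Lemma W1_trunc q p t a b x :
  (forall i, (m < i)%N -> Eth p (b * t ^ (1 - 2 * i%:Z)) != 0) ->
  W1 N q p t a b al be x = W1 m q p t a b al' be' x.
Proof.
move=> hE; rewrite /W1 (interlace_trunc hmN ha hb); case: ifP => // _.
rewrite Hfac_trunc !epochR_trunc !epochP_trunc !epochP_trunc'.
congr (_ * _).
rewrite (funext ha) (funext hb) (prod_trunc hmN) // => i hi.
rewrite (@part_out m be' i hi) (@part_out m al' i.+1 (ltn_trans hi (ltnSn i))).
rewrite mulr0 expr0z mulr1 divff ?hE // addr0.
by rewrite !epoch0 mulr0 expr0z divr1 !mulr1.
Qed.

End Trunc.

Lemma zero_trunc n m l : (forall i, (m < i)%N -> part n l i = 0%N) ->
  (m <= n)%N -> forall i, part n l i = part m l i.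
Proof.
move=> hl hmn i; case: (ltnP m i) => hi; first by rewrite hl // part_out.
rewrite /part; case: i hi => [|i] //= hi.
by rewrite hi (leq_trans hi hmn).
Qed.

Lemma part_pad n m k s : size s = m -> (m + k)%N = n ->
  forall i, part n (s ++ nseq k 0%N) i = part m s i.
Proof.
move=> hs hmk [|i] //; rewrite /part /= nth_cat hs.
case: (ltnP i m) => hi.
  by have -> : (i < n)%N by lia.
by rewrite nth_nseq !if_same.
Qed.

Lemma part_padm m k s : size s = m -> forall i, part m (s ++ nseq k 0%N) i = part m s i.
Proof.
move=> hs [|i] //; rewrite /part /= nth_cat hs.
by case: (ltnP i m).
Qed.

Lemma part_take n m s : (m <= n)%N -> forall i, part m (take m s) i = part m s i.
Proof.
move=> hmn [|i] //; rewrite /part /=.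
by case: ifP => // hi; rewrite nth_take.
Qed.

Section Main.
Variable R : realType.
Variables (q p t a b : complexC R) (n m k : nat).
Hypothesis ht : t != 0.
Hypothesis hk : (0 < k)%N.
Hypothesis hmk : (m + k)%N = n.
Hypothesis hE : forall (s i : nat), Eth p (b * t ^+ s * t ^ (1 - 2 * i%:Z)) != 0.

Lemma Tl_ne : Tl t k != [::].
Proof. by case: k hk => // k' _; rewrite Tl_S. Qed.

Lemma HT_tail nu : part n nu 1 != 0%N -> W n q p t nu (nseq n 0%N) (Tl t k) a b = 0.
Proof.
move=> h; rewrite W_tail //; case: ifP => // /forallP H.
have hn : (0 < n)%N by case: (posnP n) h => // ->; rewrite part_out.
by have := H (Ordinal hn); rewrite part_nseq /= (negbTE h).
Qed.

Lemma HT_nil a' b' nu : part m nu 1 != 0%N -> W m q p t nu (nseq m 0%N) [::] a' b' = 0.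
Proof.
move=> h; rewrite /=; case: ifP => // /forallP H.
have hn : (0 < m)%N by case: (posnP m) h => // ->; rewrite part_out.
by have := H (Ordinal hn); rewrite part_nseq /= (negbTE h).
Qed.

Lemma big_restrict (I : eqType) (r : seq I) (P Q : pred I) (F : I -> complexC R) :
  (forall i, P i -> ~~ Q i -> F i = 0) ->
  \sum_(i <- r | P i) F i = \sum_(i <- r | P i && Q i) F i.
Proof.
move=> H; rewrite big_mkcondr; apply: eq_bigr => i hi.
by case: ifP => // /negbT; apply: H.
Qed.

Lemma G xh : (size xh <= m)%N -> forall l, (forall i, (m < i)%N -> part n l i = 0%N) ->
  W n q p t l (nseq n 0%N) (xh ++ Tl t k) a b =
  W m q p t l (nseq m 0%N) [seq y * t ^- k | y <- xh] (a * t ^+ (2 * k)) (b * t ^+ k).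
Proof.
have hmn : (m <= n)%N by rewrite -hmk leq_addr.
have hb0 : forall i, part n (nseq n 0%N) i = part m (nseq m 0%N) i.
  by move=> i; rewrite !part_nseq.
elim: xh => [|y ys IH] hs l hl.
  rewrite cat0s W_tail // /=.
  have hz := zero_trunc hl hmn.
  rewrite (funext hz) (funext hb0).
  congr (if _ then _ else _).
  apply: (@forall_trunc m n (fun i => part m l i.+1 == part m (nseq m 0%N) i.+1)) => // i hi.
  by rewrite (@part_out m l i.+1) ?part_nseq // ltnS.
have hz := zero_trunc hl hmn.
case: ys IH hs => [|z zs] IH hs.
  rewrite cat_cons cat0s W_cons ?Tl_ne // size_Tl.
  under eq_bigr => nu _ do rewrite W_tail //.
  rewrite sum_pick0 [RHS]/=.
  set w := W1 _ _ _ _ _ _ _ _ _.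
  have -> : (if interlace n l (nseq n 0%N) then w else 0) = w.
    by case: ifP => // /negbT hni; rewrite /w W1_nointer.
  apply: (W1_trunc hmn hz hb0); first by rewrite part_nseq.
  by move=> i _; apply: hE.
rewrite cat_cons W_cons // map_cons W_cons // size_cat size_Tl size_map.
set S := size (z :: zs).
have hSm : (S.+1 <= m)%N by [].
rewrite (hz 1).
rewrite (@big_restrict _ _ _ (fun nu => part n nu S.+1 == 0%N)); last first.
  by move=> nu _ hnu; rewrite (W_vanish HT_tail hnu) mulr0.
rewrite [RHS](@big_restrict _ _ _ (fun nu => part m nu S.+1 == 0%N)); last first.
  move=> nu _ hnu.
  have hnu' : part m nu (size [seq y * t ^- k | y <- z :: zs]).+1 != 0%N by rewrite size_map.
  by rewrite -[X in W _ _ _ _ _ _ X _ _]cats0 (W_vanish (HT_nil _ _) hnu') mulr0.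
rewrite -big_filter -[RHS]big_filter.
have hperm : perm_eq
   [seq x <- allseqs n (part m l 1) | interlace n l x && (part n x S.+1 == 0%N)]
   [seq x ++ nseq k 0%N | x <- [seq x <- allseqs m (part m l 1) |
                                 interlace m l x && (part m x S.+1 == 0%N)]].
  apply: uniq_perm.
  - exact: filter_uniq (uniq_allseqs _ _).
  - rewrite map_inj_in_uniq ?filter_uniq ?uniq_allseqs // => x1 x2.
    rewrite !mem_filter !mem_allseqs => /andP[_ /andP[/eqP h1 _]] /andP[_ /andP[/eqP h2 _]] e.
    by rewrite -(take_size_cat (nseq k 0%N) h1) e take_size_cat.
  move=> nu; rewrite mem_filter mem_allseqs; apply/idP/mapP.
    case/andP => /andP[hi h0] /andP[/eqP hsz hall].
    have hnz : forall i, (m < i)%N -> part n nu i = 0%N.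
      move=> i hi'; apply/eqP; rewrite -leqn0.
      by apply: leq_trans (interlace_le i hi) _; rewrite hl.
    have hb' : forall i, part n nu i = part m (take m nu) i.
      by move=> i; rewrite (@part_take n m nu hmn) (zero_trunc hnz hmn).
    exists (take m nu).
      rewrite mem_filter mem_allseqs -(interlace_trunc hmn hz hb') hi -hb' h0 /=.
      rewrite size_takel ?hsz // eqxx /=.
      by apply/allP => x /mem_take hx; exact: (allP hall x hx).
    rewrite -{1}(cat_take_drop m nu); congr (_ ++ _).
    apply: (eq_from_nth (x0 := 0%N)); first by rewrite size_drop hsz size_nseq; lia.
    rewrite size_drop hsz => j hj; rewrite nth_drop nth_nseq.
    have hmj : (m < (m + j).+1)%N by rewrite ltnS leq_addr.
    have := hnz _ hmj; rewrite /part /= if_same.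
    have hj' : (m + j < n)%N by lia.
    by rewrite hj'.
  case=> nu' hnu' ->; move: hnu'; rewrite mem_filter mem_allseqs.
  case/andP => /andP[hi h0] /andP[/eqP hsz hall].
  have hp := part_pad hsz hmk.
  rewrite (interlace_trunc hmn hz hp) hi hp h0 /= size_cat size_nseq hsz hmk eqxx /=.
  by rewrite all_cat hall /=; apply/allP => x /nseqP [-> _].
rewrite (perm_big _ hperm) big_map; apply: eq_big_seq => nu hnu.
move: hnu; rewrite mem_filter mem_allseqs => /andP[/andP[hi h0] /andP[/eqP hsz _]].
have hp := part_pad hsz hmk.
have hpm := @part_padm m k nu hsz.
congr (_ * _); last first.
  rewrite IH ?(ltnW hSm) //; last first.
    by move=> i hi'; rewrite hp part_out.
  by apply: W_part; apply: funext.
have ea : a * t ^+ (2 * (S + k)) = a * t ^+ (2 * k) * t ^+ (2 * S).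
  by rewrite -mulrA -exprD mulnDr addnC.
have eb : b * t ^+ (S + k) = b * t ^+ k * t ^+ S by rewrite -mulrA -exprD addnC.
have ey : y / t ^+ (S + k) = y / t ^+ k / t ^+ S.
  by rewrite -mulrA -!exprVn addnC exprD.
rewrite ea eb ey.
apply: (W1_trunc hmn hz hp).
  exact: (interlace_zero hi (ltn0Sn _) (eqP h0) hSm).
by move=> i _; rewrite -[b * t ^+ k * t ^+ S]mulrA -exprD; apply: hE.
Qed.

End Main.

Unset Implicit Arguments.
Set Strict Implicit.

Theorem mainTheorem8 (R : realType) (n k : nat) (lam : seq nat) (xh : seq (complexC R))
    (q p t a b : complexC R) :
  (1 <= k <= n)%N ->
  size lam = n -> sorted geq lam ->
  (forall j : nat, (n - k <= j < n)%N -> nth 0%N lam j = 0%N) ->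
  size xh = (n - k)%N ->
  `|p| < 1 ->
  (* genericity of the parameters *)
  q != 0 -> t != 0 -> a != 0 -> b != 0 -> all (fun y => y != 0) xh ->
  (forall (e1 e2 e3 e4 : int) (ms : seq int), size ms = (n - k)%N ->
     ~~ [&& e1 == 0, e2 == 0, e3 == 0, e4 == 0 & all (fun m => m == 0) ms] ->
     Eth p (q ^ e1 * t ^ e2 * a ^ e3 * b ^ e4
            * \prod_(r < n - k) (nth 0 xh r) ^ (nth 0 ms r)) != 0) ->
  W n q p t lam (nseq n 0%N) (xh ++ [seq t ^+ (k - 1 - j) | j <- iota 0 k]) a b
  = W (n - k) q p t (take (n - k) lam) (nseq (n - k) 0%N)
      [seq y * t ^- k | y <- xh] (a * t ^+ (2 * k)) (b * t ^+ k).
Proof.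
move=> /andP[hk hkn] hsz _ hzero hxh _ _ ht _ _ _ hgen.
set m := (n - k)%N.
have hmk : (m + k)%N = n by rewrite subnK.
have hmn : (m <= n)%N by rewrite leq_subr.
have hE : forall (s i : nat), Eth p (b * t ^+ s * t ^ (1 - 2 * i%:Z)) != 0.
  move=> s i.
  have := hgen 0 (s%:Z + (1 - 2 * i%:Z)) 0 1 (nseq m 0) (size_nseq _ _).
  rewrite oner_eq0 !(andbF, andFb) /= => H.
  rewrite big1 in H; last by move=> r _; rewrite nth_nseq if_same expr0z.
  rewrite !expr0z expr1z exprzDr ?unitfE // !mulr1 !mul1r in H.
  by rewrite -mulrA mulrC; apply: H.
have hl : forall i, (m < i)%N -> part n lam i = 0%N.
  move=> [|i] // hi; rewrite /part /=; case: ifP => // hin.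
  by apply: hzero; rewrite -/m; apply/andP; split.
have hs : (size xh <= m)%N by rewrite hxh.
have HG := @G R q p t a b n m k ht hk hmk hE xh hs lam hl.
rewrite /Tl in HG; rewrite HG.
apply: W_part; apply: funext => i.
by rewrite (@part_take n m lam hmn).
Qed.
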